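(* In the setting of the context, let $f(x)=\sum_{i=1}^mf_i(x)$. If $\frac12(\underline C+\underline C^\top)$ is positive semidefinite, then $f$ is convex on $\mathbb{R}^m$.
   Context: There are $m$ players with decisions $x_i\in\mathbb{R}$, $x=(x_1,\dots,x_m)\in\mathbb{R}^m$. Data: $a_i\ge0$, $b_i\in\mathbb{R}$, $c_{ij}\in\mathbb{R}$ ($i\ne j$), $c_i^{\mathrm{up}}>0$, $X_i=[0,c_i^{\mathrm{up}}]$, $\eta>0$; $\mathrm{dist}(x_i,X_i)$ is the distance from $x_i$ to $X_i$. $f_i(x)=\frac12a_ix_i^2+b_ix_i+\big(\sum_{j\ne i}c_{ij}x_j\big)x_i+\frac1{2\eta}\mathrm{dist}^2(x_i,X_i)$. $\underline C\in\mathbb{R}^{m\times m}$ has $\underline C_{ii}=\frac12a_i$ and $\underline C_{ij}=c_{ij}$ for $i\ne j$. *)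

(* Defs.v *)
From HB Require Import structures.
From mathcomp Require Import all_boot all_order all_algebra.
From mathcomp Require Import classical_sets boolp reals.
Set Implicit Arguments. Unset Strict Implicit. Unset Printing Implicit Defensive.
Import Order.TTheory GRing.Theory Num.Theory.
Local Open Scope classical_set_scope.
Local Open Scope ring_scope.

Definition dist {R : realType} (t : R) (X : set R) : R :=
  inf [set `|t - y| | y in X].

Definition Xbox {R : realType} (cup : R) : set R := [set y | 0 <= y <= cup].

Definition fi {R : realType} {m : nat} (a b cup : 'I_m -> R) (c : 'I_m -> 'I_m -> R)
  (eta : R) (i : 'I_m) (x : 'cV[R]_m) : R :=
  (1/2) * a i * (x i 0) ^+ 2 + b i * x i 0
  + (\sum_(j < m | j != i) c i j * x j 0) * x i 0
  + (1 / (2 * eta)) * (dist (x i 0) (Xbox (cup i))) ^+ 2.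

Definition fsum {R : realType} {m : nat} (a b cup : 'I_m -> R) (c : 'I_m -> 'I_m -> R)
  (eta : R) (x : 'cV[R]_m) : R :=
  \sum_(i < m) fi a b cup c eta i x.

Definition Cunder {R : realType} {m : nat} (a : 'I_m -> R) (c : 'I_m -> 'I_m -> R)
  : 'M[R]_m :=
  \matrix_(i, j) (if i == j then (1/2) * a i else c i j).

Definition psd {R : realType} {m : nat} (S : 'M[R]_m) : Prop :=
  forall v : 'cV[R]_m, 0 <= (v^T *m S *m v) 0 0.

Definition convex_on_Rm {R : realType} {m : nat} (g : 'cV[R]_m -> R) : Prop :=
  forall (x y : 'cV[R]_m) (t : R), 0 <= t <= 1 ->
    g (t *: x + (1 - t) *: y) <= t * g x + (1 - t) * g y.

(* Main.v *)
Require Import Defs.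
From mathcomp Require Import all_boot all_order all_algebra.
From mathcomp Require Import classical_sets boolp reals.
From mathcomp Require Import ring lra.
Import Order.TTheory GRing.Theory Num.Theory.
Local Open Scope ring_scope.

Section Aux.
Variable R : realType.

Definition hd (c s : R) : R := Num.max (Num.max (- s) (s - c)) 0.

Lemma dist_box (c s : R) : 0 <= c -> dist s (Xbox c) = hd c s.
Proof.
move=> hc; rewrite /dist.
have lb : forall z, [set `|s - y| | y in Xbox c]%classic z -> hd c s <= z.
  move=> z [y /andP[y0 yc] <-]; rewrite /hd !ge_max; apply/andP; split; last by [].
  apply/andP; split.
    by rewrite ler_normr; apply/orP; right; lra.
  by rewrite ler_normr; apply/orP; left; lra.
apply/eqP; rewrite eq_le; apply/andP; split; last first.
  apply: lb_le_inf => //; exists `|s - 0|; exists 0 => //; rewrite /Xbox /=; lra.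
set y := if s < 0 then 0 else if c < s then c else s.
have Xy : Xbox c y.
  rewrite /y /Xbox /=; case: ifP => h1; first lra.
  case: ifP => h2; first lra. move: h1 h2; rewrite ltNge => /negbFE h1 /negbT.
  rewrite -leNgt => h2; lra.
apply: le_trans (_ : `|s - y| <= _).
  apply: ge_inf; last by exists y.
  by exists 0 => z [w _ <-].
rewrite /y /hd; case: ifP => h1.
  rewrite subr0 ler0_norm; last lra.
  rewrite le_max; apply/orP; left; rewrite le_max lexx //.
case: ifP => h2.
  rewrite ger0_norm; last lra.
  rewrite le_max; apply/orP; left; rewrite le_max lexx orbT //.
by rewrite subrr normr0 le_max lexx orbT.
Qed.

Lemma hd_convex (c s1 s2 t : R) : 0 <= t <= 1 ->
  hd c (t * s1 + (1 - t) * s2) <= t * hd c s1 + (1 - t) * hd c s2.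
Proof.
move=> /andP[t0 t1]; rewrite /hd.
set h1 := Num.max (Num.max (- s1) (s1 - c)) 0.
set h2 := Num.max (Num.max (- s2) (s2 - c)) 0.
have a1 : - s1 <= h1 by rewrite /h1 !le_max lexx.
have b1 : s1 - c <= h1 by rewrite /h1 !le_max lexx orbT.
have c1 : 0 <= h1 by rewrite /h1 !le_max lexx orbT.
have a2 : - s2 <= h2 by rewrite /h2 !le_max lexx.
have b2 : s2 - c <= h2 by rewrite /h2 !le_max lexx orbT.
have c2 : 0 <= h2 by rewrite /h2 !le_max lexx orbT.
have u0 : 0 <= 1 - t by lra.
rewrite !ge_max; apply/andP; split; first (apply/andP; split).
- have := ler_wpM2l t0 a1; have := ler_wpM2l u0 a2; nra.
- have := ler_wpM2l t0 b1; have := ler_wpM2l u0 b2; nra.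
- have := mulr_ge0 t0 c1; have := mulr_ge0 u0 c2; nra.
Qed.

Lemma hd_ge0 c s : 0 <= hd c s.
Proof. by rewrite /hd !le_max lexx orbT. Qed.

Lemma sq_convex (x1 x2 z t : R) : 0 <= t <= 1 -> 0 <= z ->
  z <= t * x1 + (1 - t) * x2 -> z ^+ 2 <= t * x1 ^+ 2 + (1 - t) * x2 ^+ 2.
Proof.
move=> /andP[t0 t1] hz hle.
apply: le_trans (_ : (t * x1 + (1 - t) * x2) ^+ 2 <= _).
  by rewrite ler_sqr // nnegrE //; apply: le_trans hle.
rewrite -subr_ge0.
have -> : t * x1 ^+ 2 + (1 - t) * x2 ^+ 2 - (t * x1 + (1 - t) * x2) ^+ 2
  = t * (1 - t) * (x1 - x2) ^+ 2 by ring.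
by apply: mulr_ge0; [apply: mulr_ge0; lra | apply: sqr_ge0].
Qed.

Lemma hd2_convex (c s1 s2 t : R) : 0 <= t <= 1 ->
  hd c (t * s1 + (1 - t) * s2) ^+ 2 <= t * hd c s1 ^+ 2 + (1 - t) * hd c s2 ^+ 2.
Proof.
move=> ht; apply: sq_convex => //; [exact: hd_ge0 | exact: hd_convex].
Qed.
End Aux.
Arguments hd {R}.
Arguments dist_box {R}.
Arguments hd2_convex {R}.

Section Main.
Variables (R : realType) (m : nat) (a b cup : 'I_m -> R) (c : 'I_m -> 'I_m -> R) (eta : R).

Definition Qf (x : 'cV[R]_m) :=
  \sum_(i < m) \sum_(j < m) x i 0 * Cunder a c i j * x j 0.

Lemma fi_quad i (x : 'cV[R]_m) :
  (1/2) * a i * x i 0 ^+ 2 + (\sum_(j < m | j != i) c i j * x j 0) * x i 0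
  = \sum_(j < m) x i 0 * Cunder a c i j * x j 0.
Proof.
rewrite /Cunder [in RHS](bigD1 i) //= mxE eqxx mulr_suml; congr (_ + _); first ring.
apply: eq_bigr => j hj; rewrite mxE eq_sym (negbTE hj); ring.
Qed.

Lemma fsum_eq (hcup : forall i, 0 < cup i) (x : 'cV[R]_m) :
  fsum a b cup c eta x = Qf x + \sum_(i < m) b i * x i 0
    + \sum_(i < m) (1 / (2 * eta)) * hd (cup i) (x i 0) ^+ 2.
Proof.
rewrite /fsum /Qf -!big_split; apply: eq_bigr => i _ /=.
rewrite /fi dist_box; last exact: ltW (hcup i).
rewrite -fi_quad; ring.
Qed.

Lemma Qf_comb (x y : 'cV[R]_m) t :
  t * Qf x + (1 - t) * Qf y - Qf (t *: x + (1 - t) *: y)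
  = t * (1 - t) * Qf (x - y).
Proof.
rewrite /Qf !mulr_sumr -big_split -sumrB; apply: eq_bigr => i _ /=.
rewrite !mulr_sumr -big_split -sumrB; apply: eq_bigr => j _ /=.
rewrite !mxE; ring.
Qed.

Lemma Qf_psd (v : 'cV[R]_m) :
  psd ((1/2) *: (Cunder a c + (Cunder a c)^T)) -> 0 <= Qf v.
Proof.
move=> /(_ v); set C := Cunder a c.
have -> : (v^T *m ((1/2) *: (C + C^T)) *m v) 0 0 =
   (1/2) * (\sum_(j < m) \sum_(i < m) v i 0 * C i j * v j 0)
   + (1/2) * (\sum_(j < m) \sum_(i < m) v j 0 * C j i * v i 0).
  rewrite mxE !mulr_sumr -big_split; apply: eq_bigr => j _ /=.
  rewrite mxE mulr_suml !mulr_sumr -big_split; apply: eq_bigr => i _ /=.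
  rewrite !mxE; ring.
rewrite exchange_big /=.
have -> : \sum_(j < m) \sum_(i < m) v j 0 * C j i * v i 0 = Qf v by [].
rewrite -/(Qf v); lra.
Qed.

End Main.
Arguments Qf {R m}.

Theorem lemma10 (R : realType) (m : nat) (a b cup : 'I_m -> R)
  (c : 'I_m -> 'I_m -> R) (eta : R)
  (ha : forall i, 0 <= a i) (hcup : forall i, 0 < cup i) (heta : 0 < eta) :
  psd ((1/2) *: (Cunder a c + (Cunder a c)^T)) ->
  convex_on_Rm (fsum a b cup c eta).
Proof.
move=> hpsd x y t ht.
rewrite !fsum_eq //.
set z := t *: x + (1 - t) *: y.
have hQ : Qf a c z <= t * Qf a c x + (1 - t) * Qf a c y.
  rewrite -subr_ge0 Qf_comb; move: ht => /andP[t0 t1].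
  apply: mulr_ge0; first (apply: mulr_ge0; lra).
  exact: Qf_psd.
have hL : \sum_(i < m) b i * z i 0 =
   t * \sum_(i < m) b i * x i 0 + (1 - t) * \sum_(i < m) b i * y i 0.
  rewrite !mulr_sumr -big_split; apply: eq_bigr => i _ /=; rewrite !mxE; ring.
have hk : 0 <= 1 / (2 * eta).
  by rewrite divr_ge0 // mulr_ge0 // ltW.
have hD : \sum_(i < m) (1 / (2 * eta)) * hd (cup i) (z i 0) ^+ 2 <=
   t * \sum_(i < m) (1 / (2 * eta)) * hd (cup i) (x i 0) ^+ 2
   + (1 - t) * \sum_(i < m) (1 / (2 * eta)) * hd (cup i) (y i 0) ^+ 2.
  rewrite !mulr_sumr -big_split; apply: ler_sum => i _ /=; rewrite !mxE.
  have -> : t * (1 / (2 * eta) * hd (cup i) (x i 0) ^+ 2) +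
     (1 - t) * (1 / (2 * eta) * hd (cup i) (y i 0) ^+ 2) =
     1 / (2 * eta) * (t * hd (cup i) (x i 0) ^+ 2 + (1 - t) * hd (cup i) (y i 0) ^+ 2)
     by ring.
  by apply: ler_wpM2l => //; apply: hd2_convex.
set Qx := Qf a c x; set Qy := Qf a c y.
set Lx := \sum_(i < m) b i * x i 0; set Ly := \sum_(i < m) b i * y i 0.
set Dx := \sum_(i < m) _ * hd (cup i) (x i 0) ^+ 2.
set Dy := \sum_(i < m) _ * hd (cup i) (y i 0) ^+ 2.
have -> : t * (Qx + Lx + Dx) + (1 - t) * (Qy + Ly + Dy) =
  (t * Qx + (1 - t) * Qy) + (t * Lx + (1 - t) * Ly) + (t * Dx + (1 - t) * Dy) by ring.
rewrite hL; apply: lerD => //; apply: lerD => //.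
Qed.
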